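(* Let $G(X)=\sum_{n\ge 1}c_nX^n\in\mathbb{F}_2[[X]]$ be the compositional inverse of $F(X)=\sum_{n\ge1}t_nX^n\in\mathbb{F}_2[[X]]$, and set $c_0=0$. Then $G$ satisfies each of the polynomial equations $$X^2G(X)^3+X(1+X)G(X)^2+(X^2+1)G(X)+X(X+1)=0,$$ $$X^3G(X)^4+(1+X)G(X)+X(X^2+1)=0$$ over $\mathbb{F}_2[[X]]$. In particular, $c_0=0$, $c_1=c_2=1$, $c_3=0$, and for every $n\ge 1$: $$c_{4n}=c_{4n-1},\quad c_{4n+1}=c_{4n-1},\quad c_{4n+2}=c_{4n-1},\quad c_{4n+3}\equiv c_{4n-1}+c_n \pmod 2.$$
   Context: For $n\in\mathbb{N}=\{0,1,2,\dots\}$ let $s_2(n)$ denote the sum of the binary digits of $n$, and let $t_n=s_2(n)\bmod 2\in\{0,1\}$ (the Prouhet–Thue–Morse sequence). Since $t_0=0$ and $t_1=1$, the series $F(X)=\sum_{n\ge1}t_nX^n\in\mathbb{F}_2[[X]]$ has a unique compositional inverse $G\in\mathbb{F}_2[[X]]$, i.e. $F(G(X))=G(F(X))=X$. The coefficients $c_n$ are identified with integers in $\{0,1\}$. *)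

(* Defs.v *)
From mathcomp Require Import all_boot all_algebra.
Set Implicit Arguments. Unset Strict Implicit. Unset Printing Implicit Defensive.
Import GRing.Theory.
Local Open Scope ring_scope.

Definition F2 := 'F_2.
Definition series := nat -> F2.

Definition szero : series := fun _ => 0.
Definition sone : series := fun n => (n == 0%N)%:R.
Definition sX : series := fun n => (n == 1%N)%:R.
Definition sadd (a b : series) : series := fun n => a n + b n.
Definition smul (a b : series) : series :=
  fun n => \sum_(i < n.+1) a i * b (n - i)%N.
Fixpoint spow (a : series) (k : nat) : series :=
  match k with 0%N => sone | k'.+1 => smul a (spow a k') end.
(* composition f(g); this is the genuine composition when g 0 = 0
   (then g^k has no coefficient below degree k, so the sum is exact) *)
Definition scomp (f g : series) : series :=
  fun n => \sum_(k < n.+1) f k * spow g k n.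
Definition sp (p : {poly F2}) : series := fun n => p`_n.

(* s_2(n): sum of binary digits of n (digit i is (n / 2^i) mod 2; digits
   with i > n vanish) *)
Definition s2 (n : nat) : nat := \sum_(i < n.+1) ((n %/ 2 ^ i) %% 2).
Definition tm (n : nat) : F2 := (s2 n %% 2)%:R.
Definition Fser : series := fun n => if n == 0%N then 0 else tm n.

(* Main.v *)
Require Import Defs.
From mathcomp Require Import all_boot all_algebra zify ring.
From Stdlib Require Import FunctionalExtensionality.
Import GRing.Theory.
Local Open Scope ring_scope.


Lemma F2two : (1 + 1 : F2) = 0. Proof. by apply/eqP. Qed.
Lemma F2cases (x : F2) : x = 0 \/ x = 1.
Proof. case: x => [[|[|//]]] H. by left; apply/val_inj. by right; apply/val_inj. Qed.
Lemma poly_two : (1 + 1 : {poly F2}) = 0.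
Proof. by rewrite -polyC1 -polyCD F2two polyC0. Qed.

Lemma sum_tail (R : nzSemiRingType) (F : nat -> R) a m :
  (forall i, (a <= i)%N -> F i = 0) -> (a <= m)%N ->
  \sum_(i < m) F i = \sum_(i < a) F i.
Proof.
move=> H0 am; rewrite -(subnKC am) big_split_ord /= [X in _ + X]big1 ?addr0 // => i _.
apply: H0; exact: leq_addr.
Qed.

Implicit Types p q r : {poly F2}.
Definition cg N (p q : {poly F2}) := forall i, (i < N)%N -> p`_i = q`_i.

Lemma cgD N p p' q q' : cg N p p' -> cg N q q' -> cg N (p + q) (p' + q').
Proof. by move=> H1 H2 i Hi; rewrite !coefD H1 ?H2. Qed.

Lemma cgM N p p' q q' : cg N p p' -> cg N q q' -> cg N (p * q) (p' * q').
Proof.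
move=> H1 H2 i Hi; rewrite !coefM; apply: eq_bigr => j _.
have Hj := ltn_ord j; rewrite H1 ?H2 //; lia.
Qed.

Lemma cgX N p p' k : cg N p p' -> cg N (p ^+ k) (p' ^+ k).
Proof. by move=> H; elim: k => [|k IH]; rewrite ?expr0 // !exprS; apply: cgM. Qed.

Lemma cg_trans N p q r : cg N p q -> cg N q r -> cg N p r.
Proof. by move=> H1 H2 i Hi; rewrite H1 ?H2. Qed.
Lemma cg_sym N p q : cg N p q -> cg N q p.
Proof. by move=> H1 i Hi; rewrite H1. Qed.

Lemma powX0 (p : {poly F2}) k i : p`_0 = 0 -> (i < k)%N -> (p ^+ k)`_i = 0.
Proof.
move=> H0; elim: k i => [//|k IH] i Hi.
rewrite exprS coefM big1 // => [[[|j] Hj]] _ /=; first by rewrite H0 mul0r.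
rewrite IH ?mulr0 //; lia.
Qed.

Lemma cg_comp0 N p q : cg N p 0 -> q`_0 = 0 -> cg N (p \Po q) 0.
Proof.
move=> Hp Hq i Hi; rewrite coef_comp_poly coef0 big1 // => k _.
case: (ltnP i k) => ik; first by rewrite powX0 // mulr0.
rewrite Hp ?coef0 ?mul0r //; lia.
Qed.

Lemma cg_compl N p p' q : cg N p p' -> q`_0 = 0 -> cg N (p \Po q) (p' \Po q).
Proof.
move=> H Hq.
have H1 : cg N (p - p') 0 by move=> i Hi; rewrite coefB H // subrr coef0.
move=> i Hi; have := @cg_comp0 N _ _ H1 Hq i Hi; rewrite comp_polyB coefB coef0.
by move/eqP; rewrite subr_eq0 => /eqP.
Qed.

Lemma cg_compr N p q q' : cg N q q' -> cg N (p \Po q) (p \Po q').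
Proof.
move=> H i Hi; rewrite !coef_comp_poly; apply: eq_bigr => k _.
by rewrite (@cgX N _ _ k H i Hi).
Qed.

Lemma sq_comp (p : {poly F2}) : p ^+ 2 = p \Po 'X^2.
Proof.
elim/poly_ind: p => [|p c IH]; first by rewrite expr0n comp_poly0.
rewrite comp_poly_MXaddC -IH.
have cc : c%:P ^+ 2 = c%:P :> {poly F2}.
  by case: (F2cases c) => ->; rewrite ?polyC0 ?polyC1 ?expr1n // expr2 mul0r.
have E : (p * 'X + c%:P) ^+ 2 = p ^+ 2 * 'X ^+ 2 + c%:P ^+ 2 + (1 + 1) * (p * 'X * c%:P)
  by ring.
by rewrite E poly_two mul0r addr0 cc.
Qed.

Lemma four_comp (p : {poly F2}) : p ^+ 4 = p \Po 'X^4.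
Proof.
rewrite (exprM p 2 2) sq_comp [p ^+ 2]sq_comp -comp_polyA comp_Xn_poly -exprM //.
Qed.

Lemma sum_tailn (F : nat -> nat) a m :
  (forall i, (a <= i)%N -> F i = 0%N) -> (a <= m)%N ->
  (\sum_(i < m) F i = \sum_(i < a) F i)%N.
Proof.
move=> H0 am; rewrite -(subnKC am) big_split_ord /= [X in (_ + X)%N]big1 ?addn0 // => i _.
apply: H0; exact: leq_addr.
Qed.

Lemma s2_wide n M : (n < M)%N -> s2 n = (\sum_(i < M) (n %/ 2 ^ i) %% 2)%N.
Proof.
move=> nM; rewrite /s2; symmetry; apply: (@sum_tailn (fun i => (n %/ 2 ^ i) %% 2)%N) => // i Hi.
rewrite divn_small // (leq_trans (ltn_expl n (isT : 1 < 2)%N)) //.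
by rewrite leq_exp2l // ltnW.
Qed.

Lemma s2_double k : s2 k.*2 = s2 k.
Proof.
rewrite (@s2_wide _ (k.*2).+2) // big_ord_recl /= (@s2_wide _ (k.*2).+1); last lia.
have -> : (k.*2 %/ 2 ^ 0 %% 2 = 0)%N by rewrite expn0 divn1 -mul2n modnMr.
rewrite add0n; apply: eq_bigr => i _.
by rewrite /bump /= add1n expnS divnMA (_ : k.*2 %/ 2 = k)%N //; lia.
Qed.

Lemma s2_doubleS k : s2 (k.*2).+1 = (s2 k).+1.
Proof.
rewrite (@s2_wide _ (k.*2).+3) // big_ord_recl /= (@s2_wide _ (k.*2).+2); last lia.
have -> : ((k.*2).+1 %/ 2 ^ 0 %% 2 = 1)%N by rewrite expn0 divn1; lia.
rewrite add1n; congr _.+1; apply: eq_bigr => i _.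
rewrite /bump /= add1n expnS divnMA.
by have -> : ((k.*2).+1 %/ 2 = k)%N by lia.
Qed.

Lemma natF2 m : ((m %% 2)%:R : F2) = m%:R.
Proof.
rewrite {2}(divn_eq m 2) natrD natrM (_ : 2%:R = 0 :> F2) ?mulr0 ?add0r //.
by apply/eqP.
Qed.

Lemma tmE n : tm n = (s2 n)%:R.
Proof. by rewrite /tm natF2. Qed.

Lemma tm_double k : tm k.*2 = tm k.
Proof. by rewrite !tmE s2_double. Qed.
Lemma tm_doubleS k : tm (k.*2).+1 = tm k + 1.
Proof. by rewrite !tmE s2_doubleS mulrSr. Qed.
Lemma Fser_tm j : Fser j = tm j.
Proof. case: j => [|j] //. by rewrite /Fser /tm /s2 big_ord1. Qed.

Definition eqN N (p : {poly F2}) (a : series) := forall i, (i < N)%N -> p`_i = a i.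
Definition tr N (a : series) : {poly F2} := \poly_(i < N) a i.

Lemma eqN_tr N a : eqN N (tr N a) a.
Proof. by move=> i Hi; rewrite coef_poly Hi. Qed.
Lemma eqN_add N p q a b : eqN N p a -> eqN N q b -> eqN N (p + q) (sadd a b).
Proof. by move=> H1 H2 i Hi; rewrite coefD /sadd H1 ?H2. Qed.
Lemma eqN_mul N p q a b : eqN N p a -> eqN N q b -> eqN N (p * q) (smul a b).
Proof.
move=> H1 H2 i Hi; rewrite coefM /smul; apply: eq_bigr => j _.
have Hj := ltn_ord j; rewrite H1 ?H2 //; lia.
Qed.
Lemma eqN_pow N p a k : eqN N p a -> eqN N (p ^+ k) (spow a k).
Proof.
move=> H; elim: k => [|k IH] /=; first by move=> i _; rewrite expr0 coef1.
by rewrite exprS; apply: eqN_mul.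
Qed.
Lemma eqN_sp N p : eqN N p (sp p).
Proof. by []. Qed.
Lemma eqN_cg N p q a : cg N p q -> eqN N q a -> eqN N p a.
Proof. by move=> H1 H2 i Hi; rewrite H1 ?H2. Qed.

Lemma eqN_comp N p q f g : eqN N p f -> eqN N q g -> g 0%N = 0 ->
  eqN N (p \Po q) (scomp f g).
Proof.
move=> Hp Hq g0 i Hi.
have q0 : q`_0 = 0 by rewrite Hq //; lia.
rewrite coef_comp_poly /scomp.
pose P k := p`_k * (q ^+ k)`_i.
transitivity (\sum_(k < size p + i.+1) P k).
  symmetry; apply: (@sum_tail _ P); last exact: leq_addr.
  by move=> k Hk; rewrite /P nth_default ?mul0r.
rewrite (@sum_tail _ P i.+1); last exact: leq_addl.
  apply: eq_bigr => k _; have Hk := ltn_ord k.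
  rewrite /P Hp; last lia.
  by rewrite (@eqN_pow N _ _ k Hq); last lia.
by move=> k Hk; rewrite /P powX0 ?mulr0.
Qed.

Ltac f2 := repeat match goal with |- context [tm ?x] =>
  let a := fresh "a" in move: (tm x) => a; case: (F2cases a) => -> end;
  by apply/eqP.

Lemma tm0 : tm 0 = 0. Proof. by rewrite -Fser_tm. Qed.

Lemma tm_cong N : cg N ((1 + 'X)^+3 * (tr N Fser)^+2 + (1 + 'X)^+2 * tr N Fser + 'X) 0.
Proof.
set t := tr N Fser.
rewrite [t ^+ 2]sq_comp. set u := t \Po 'X^2.
have E : (1 + 'X)^+3 * u + (1 + 'X)^+2 * t + 'X =
   u + 'X * u + 'X^2 * u + 'X^3 * u + t + 'X^2 * t + 'X
   + (1+1) * ('X * u + 'X^2 * u + 'X * t) by ring.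
rewrite E poly_two mul0r addr0.
have tc : forall j, (j < N)%N -> t`_j = tm j.
  by move=> j Hj; rewrite coef_poly Hj Fser_tm.
have uc : forall j, (j < N)%N -> u`_j = if odd j then 0 else tm j./2.
  move=> j Hj; rewrite coef_comp_poly_Xn // dvdn2 -divn2; case: (odd j) => //=.
  rewrite tc //; lia.
move=> i Hi; rewrite coef0 !coefD coefXM !coefXnM coefX.
case: i Hi => [|[|[|m]]] Hi /=; rewrite ?subSS ?subn0 !uc ?tc; try lia.
- by rewrite /= (_ : tm 0 = 0) ?addr0 // -Fser_tm.
- by rewrite /= (tm_doubleS 0) tm0; f2.
- by rewrite /= (tm_double 1); f2.
- case om: (odd m); have mE := odd_double_half m; rewrite om in mE;
  rewrite -mE /= ?odd_double /=;
  by move: (m./2) => k; rewrite ?add0n ?add1n doubleK -!doubleS ?tm_double ?tm_doubleS; f2.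
Qed.

Definition E1p (g : {poly F2}) :=
  'X^2 * g ^+ 3 + 'X * (1 + 'X) * g ^+ 2 + (('X^2 + 1) * g + 'X * ('X + 1)).
Definition E2p (g : {poly F2}) :=
  'X^3 * g ^+ 4 + (1 + 'X) * g + 'X * ('X^2 + 1).

Lemma comp_one (q : {poly F2}) : 1 \Po q = 1.
Proof. exact: (comp_poly_multiplicative q).2. Qed.
Lemma comp_pow (p q : {poly F2}) k : (p ^+ k) \Po q = (p \Po q) ^+ k.
Proof. by elim: k => [|k IH]; rewrite ?expr0 ?comp_one // !exprS comp_polyM IH. Qed.

Lemma key1 N (G : series) : G 0%N = 0 -> scomp Fser G = sX -> cg N (E1p (tr N G)) 0.
Proof.
move=> G0 HF; set g := tr N G; set t := tr N Fser.
have g0 : g`_0 = 0 by rewrite coef_poly; case: N {g t} => [|N] /=.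
have H1 : cg N (t \Po g) 'X.
  move=> i Hi; rewrite (@eqN_comp N _ _ _ _ (eqN_tr N Fser) (eqN_tr N G) G0 i Hi) HF coefX //.
have H2 := @cg_comp0 N _ _ (tm_cong N) g0.
rewrite -/t !comp_polyD (comp_polyM ((1+'X)^+3)) (comp_polyM ((1+'X)^+2)) !comp_pow comp_polyD comp_polyX comp_one in H2.
have H3 : cg N ((1 + g) ^+ 3 * 'X ^+ 2 + (1 + g) ^+ 2 * 'X + g) 0.
  apply: cg_trans H2; apply: cgD; last by [].
  apply: cgD; apply: cgM => //; last exact: cg_sym.
  exact: cg_sym (@cgX N _ _ 2 H1).
have E : (1 + g) ^+ 3 * 'X ^+ 2 + (1 + g) ^+ 2 * 'X + g =
   E1p g + (1 + 1) * ('X^2 * g + 'X^2 * g ^+ 2 + 'X * g) by rewrite /E1p; ring.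
by rewrite E poly_two mul0r addr0 in H3.
Qed.

Lemma key2 N (G : series) : G 0%N = 0 -> scomp Fser G = sX -> cg N (E2p (tr N G)) 0.
Proof.
move=> G0 HF; set g := tr N G.
have H := @cgM N ('X * g + 'X + 1) ('X * g + 'X + 1) _ _ (fun _ _ => erefl) (@key1 N G G0 HF).
have E : ('X * g + 'X + 1) * E1p g = E2p g + (1 + 1) *
  (('X^3 + 'X^2) * g ^+ 3 + ('X^3 + 'X^2 + 'X) * g ^+ 2 + ('X^3 + 'X^2) * g + 'X^2)
  by rewrite /E1p /E2p; ring.
by rewrite mulr0 E poly_two mul0r addr0 in H.
Qed.

Lemma recG (G : series) m : G 0%N = 0 -> scomp Fser G = sX ->
  (if (m < 3)%N then 0 else if (4 %| (m - 3))%N then G ((m - 3) %/ 4)%N else 0)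
   + (G m + (if m == 0%N then 0 else G m.-1)) + ((m == 3%N)%:R + (m == 1%N)%:R) = 0.
Proof.
move=> G0 HF; have H := @key2 m.+1 G G0 HF m (ltnSn m).
move: H; set g := tr m.+1 G => H.
have gc : forall j, (j < m.+1)%N -> g`_j = G j by move=> j Hj; rewrite coef_poly Hj.
have E : E2p g = 'X^3 * (g \Po 'X^4) + (g + 'X * g) + ('X^3 + 'X).
  by rewrite /E2p -four_comp; ring.
rewrite E coef0 !coefD !coefXnM coefXM coef_comp_poly_Xn // coefXn coefX in H.
rewrite !gc in H; first exact: H.
all: lia.
Qed.

Ltac f2G G := repeat match goal with |- context [G ?x] =>
  let a := fresh "a" in move: (G x) => a; case: (F2cases a) => -> end;
  let HH := fresh "HH" in move=> /eqP HH; apply/eqP; move: HH; by [].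

Theorem mainTheorem1 (G : series) :
  G 0%N = 0 ->
  scomp Fser G = sX ->
  scomp G Fser = sX ->
  (* X^2 G^3 + X(1+X) G^2 + (X^2+1) G + X(X+1) = 0 *)
  sadd (sadd (smul (sp ('X ^+ 2)) (spow G 3))
             (smul (sp ('X * (1 + 'X))) (spow G 2)))
       (sadd (smul (sp ('X ^+ 2 + 1)) G) (sp ('X * ('X + 1)))) = szero /\
  (* X^3 G^4 + (1+X) G + X(X^2+1) = 0 *)
  sadd (sadd (smul (sp ('X ^+ 3)) (spow G 4)) (smul (sp (1 + 'X)) G))
       (sp ('X * ('X ^+ 2 + 1))) = szero /\
  G 0%N = 0 /\ G 1%N = 1 /\ G 2%N = 1 /\ G 3%N = 0 /\
  (forall n : nat, (1 <= n)%N ->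
     [/\ G (4 * n)%N = G (4 * n - 1)%N,
         G (4 * n + 1)%N = G (4 * n - 1)%N,
         G (4 * n + 2)%N = G (4 * n - 1)%N &
         G (4 * n + 3)%N = G (4 * n - 1)%N + G n]).
Proof.
move=> G0 HF _.
have ser : forall (N : nat) p (a : series), eqN N p a -> cg N p 0 ->
    forall n, (n < N)%N -> a n = 0.
  by move=> N p a H1 H2 n Hn; rewrite -H1 // H2 // coef0.
have eqs : forall N, eqN N (tr N G) G by move=> N; exact: eqN_tr.
split.
  apply: functional_extensionality => n.
  apply: (ser n.+1 (E1p (tr n.+1 G))); last exact: ltnSn.
    rewrite /E1p; repeat first [apply: eqN_tr | apply: eqN_sp | apply: eqN_pow
                               | apply: eqN_add | apply: eqN_mul].
  exact: (@key1 _ G G0 HF).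
split.
  apply: functional_extensionality => n.
  apply: (ser n.+1 (E2p (tr n.+1 G))); last exact: ltnSn.
    rewrite /E2p; repeat first [apply: eqN_tr | apply: eqN_sp | apply: eqN_pow
                               | apply: eqN_add | apply: eqN_mul].
  exact: (@key2 _ G G0 HF).
have r1 : G 1%N = 1.
  have := @recG G 1 G0 HF; rewrite /= G0; f2G G.
have r2 : G 2%N = 1.
  have := @recG G 2 G0 HF; rewrite /= r1; f2G G.
have r3 : G 3%N = 0.
  have := @recG G 3 G0 HF; rewrite /= (_ : ((3 - 3) %/ 4 = 0)%N) // G0 r2; f2G G.
do 4 (split => //).
move=> n Hn.
have q0 : G (4 * n)%N = G (4 * n - 1)%N.
  have := @recG G (4 * n) G0 HF.
  rewrite (_ : (4 * n < 3)%N = false); last lia.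
  rewrite (_ : (4 %| 4 * n - 3)%N = false); last lia.
  rewrite (_ : (4 * n == 0)%N = false); last lia.
  rewrite (_ : (4 * n == 3)%N = false); last lia.
  rewrite (_ : (4 * n == 1)%N = false); last lia.
  rewrite (_ : (4 * n).-1 = 4 * n - 1)%N; last lia.
  f2G G.
have q1 : G (4 * n + 1)%N = G (4 * n + 0)%N.
  have := @recG G (4 * n + 1) G0 HF.
  rewrite (_ : (4 * n + 1 < 3)%N = false); last lia.
  rewrite (_ : (4 %| 4 * n + 1 - 3)%N = false); last lia.
  rewrite (_ : (4 * n + 1 == 0)%N = false); last lia.
  rewrite (_ : (4 * n + 1 == 3)%N = false); last lia.
  rewrite (_ : (4 * n + 1 == 1)%N = false); last lia.
  rewrite (_ : (4 * n + 1).-1 = 4 * n + 0)%N; last lia.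
  f2G G.
have q2 : G (4 * n + 2)%N = G (4 * n + 1)%N.
  have := @recG G (4 * n + 2) G0 HF.
  rewrite (_ : (4 * n + 2 < 3)%N = false); last lia.
  rewrite (_ : (4 %| 4 * n + 2 - 3)%N = false); last lia.
  rewrite (_ : (4 * n + 2 == 0)%N = false); last lia.
  rewrite (_ : (4 * n + 2 == 3)%N = false); last lia.
  rewrite (_ : (4 * n + 2 == 1)%N = false); last lia.
  rewrite (_ : (4 * n + 2).-1 = 4 * n + 1)%N; last lia.
  f2G G.
have q3 : G (4 * n + 3)%N = G (4 * n + 2)%N + G n.
  have := @recG G (4 * n + 3) G0 HF.
  rewrite (_ : (4 * n + 3 < 3)%N = false); last lia.
  rewrite (_ : (4 %| 4 * n + 3 - 3)%N = true); last lia.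
  rewrite (_ : (4 * n + 3 == 0)%N = false); last lia.
  rewrite (_ : (4 * n + 3 == 3)%N = false); last lia.
  rewrite (_ : (4 * n + 3 == 1)%N = false); last lia.
  rewrite (_ : (4 * n + 3).-1 = 4 * n + 2)%N; last lia.
  rewrite (_ : ((4 * n + 3 - 3) %/ 4 = n)%N); last lia.
  f2G G.
rewrite addn0 in q1.
by split; rewrite ?q3 ?q2 ?q1 ?q0.
Qed.
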